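(* Let $q=4$. Let $\mathcal N_1,\dots,\mathcal N_5$ be the sets of $\Gamma$-planes, $2_{\mathscr C}$-planes, $3_{\mathscr C}$-planes, $\overline{1_{\mathscr C}}$-planes and $0_{\mathscr C}$-planes, and $\mathcal M_1,\dots,\mathcal M_5$ the sets of $\mathscr C$-points, T-points, $3_\Gamma$-points, $1_\Gamma$-points and $0_\Gamma$-points (these are the $G_4$-orbits). For each pair $(i,j)$ every plane of $\mathcal N_i$ contains exactly $t_{ij}$ points of $\mathcal M_j$ and every point of $\mathcal M_j$ lies on exactly $b_{ij}$ planes of $\mathcal N_i$, where, listing $(t_{ij},b_{ij})$ for $j=1,\dots,5$: $\mathcal N_1$: $(1,1),(8,2),(6,3),(6,1),(0,0)$; $\mathcal N_2$: $(2,8),(7,7),(1,2),(6,4),(5,5)$; $\mathcal N_3$: $(3,6),(2,1),(4,4),(6,2),(6,3)$; $\mathcal N_4$: $(1,6),(4,6),(2,6),(10,10),(4,6)$; $\mathcal N_5$: $(0,0),(5,5),(3,6),(6,4),(7,7)$.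
   Context: Notation. $\mathbb F_q$ is the field with $q$ elements, $\mathbb F_q^+=\mathbb F_q\cup\{\infty\}$. Points of $\mathrm{PG}(3,q)$ are written $\mathbf P(x_0,x_1,x_2,x_3)$ with $x$ a nonzero row vector up to scalars; $\boldsymbol\pi(c_0,c_1,c_2,c_3)$ is the plane $c_0x_0+c_1x_1+c_2x_2+c_3x_3=0$. Put $P(t)=\mathbf P(t^3,t^2,t,1)$ for $t\in\mathbb F_q$, $P(\infty)=\mathbf P(1,0,0,0)$, and $\mathscr C=\{P(t):t\in\mathbb F_q^+\}$ (the twisted cubic). The osculating planes are $\pi_{\rm osc}(t)=\boldsymbol\pi(1,-3t,3t^2,-t^3)$ ($t\in\mathbb F_q$) and $\pi_{\rm osc}(\infty)=\boldsymbol\pi(0,0,0,1)$; these $q+1$ planes are called $\Gamma$-planes. The tangent at $P(t)$, $t\in\mathbb F_q$, is the line through $P(t)$ and $\mathbf P(3t^2,2t,1,0)$; the tangent at $P(\infty)$ is the line through $\mathbf P(1,0,0,0)$ and $\mathbf P(0,1,0,0)$. $G_q$ is the group of all projectivities of $\mathrm{PG}(3,q)$ mapping $\mathscr C$ onto itself. Plane types: $\Gamma$-plane = osculating plane; $\overline{1_{\mathscr C}}$-plane = non-osculating plane meeting $\mathscr C$ in exactly one point; $d_{\mathscr C}$-plane ($d\in\{0,2,3\}$) = plane meeting $\mathscr C$ in exactly $d$ points. Point types (for $q\not\equiv0\pmod 3$): $\mathscr C$-point = point of $\mathscr C$; T-point = point off $\mathscr C$ on some tangent; for $\mu\in\{0,1,3\}$,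 $\mu_\Gamma$-point = point off $\mathscr C$, on no tangent, lying on exactly $\mu$ $\Gamma$-planes. *)

(* Defs.v *)
From HB Require Import structures.
From mathcomp Require Import all_boot all_order all_algebra all_field.
Set Implicit Arguments. Unset Strict Implicit. Unset Printing Implicit Defensive.
Import Order.TTheory GRing.Theory.
Local Open Scope ring_scope.

Section PG3.
Variable F : finFieldType.

(* Homogeneous coordinate vectors (of points and of planes). *)
Definition vec := 'rV[F]_4.

Definition mkv (a b c d : F) : vec :=
  \row_(i < 4) [:: a; b; c; d]`_i.

(* Canonical representative of a projective point / plane: nonzero vector
   whose first nonzero coordinate is 1.  Each point of PG(3,q) has exactly
   one such representative. *)
Definition normalized (v : vec) : bool :=
  [exists i : 'I_4, (v 0 i == 1) && [forall j : 'I_4, (j < i)%N ==> (v 0 j == 0)]].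

Definition proj_eq (u v : vec) : bool :=
  [exists k : F, (k != 0) && (u == k *: v)].

Definition incident (x c : vec) : bool := \sum_(i < 4) c 0 i * x 0 i == 0.

(* parameters in F^+ = F u {oo}; None stands for oo *)
Definition curvePt (t : option F) : vec :=
  match t with
  | Some t => mkv (t ^+ 3) (t ^+ 2) t 1
  | None => mkv 1 0 0 0
  end.

(* second point spanning the tangent at P(t) *)
Definition tangDir (t : option F) : vec :=
  match t with
  | Some t => mkv (3%:R * t ^+ 2) (2%:R * t) 1 0
  | None => mkv 0 1 0 0
  end.

Definition oscPlane (t : option F) : vec :=
  match t with
  | Some t => mkv 1 (- (3%:R * t)) (3%:R * t ^+ 2) (- t ^+ 3)
  | None => mkv 0 0 0 1
  end.

Definition onCurve (x : vec) : bool := [exists t, proj_eq x (curvePt t)].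

Definition onTangent (x : vec) : bool :=
  [exists t : option F, exists a : F, exists b : F,
     ((a, b) != (0, 0)) && (x == a *: curvePt t + b *: tangDir t)].

Definition isGammaPlane (c : vec) : bool := [exists t, proj_eq c (oscPlane t)].

Definition pointsSet : {set vec} := [set x | normalized x].
Definition planesSet : {set vec} := [set c | normalized c].

Definition curveMeet (c : vec) : nat :=
  #|[set x in pointsSet | onCurve x && incident x c]|.

Definition numGamma (x : vec) : nat :=
  #|[set c in planesSet | isGammaPlane c && incident x c]|.

Definition planeClass (i : nat) (c : vec) : bool :=
  match i with
  | 1 => isGammaPlane c
  | 2 => curveMeet c == 2
  | 3 => curveMeet c == 3
  | 4 => ~~ isGammaPlane c && (curveMeet c == 1)
  | 5 => curveMeet c == 0
  | _ => false
  end%N.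

Definition pointClass (j : nat) (x : vec) : bool :=
  match j with
  | 1 => onCurve x
  | 2 => ~~ onCurve x && onTangent x
  | 3 => ~~ onCurve x && ~~ onTangent x && (numGamma x == 3)
  | 4 => ~~ onCurve x && ~~ onTangent x && (numGamma x == 1)
  | 5 => ~~ onCurve x && ~~ onTangent x && (numGamma x == 0)
  | _ => false
  end%N.

End PG3.

Definition tTable (i j : nat) : nat :=
  nth 0%N (nth [::] [:: [:: 1; 8; 6; 6; 0];
                       [:: 2; 7; 1; 6; 5];
                       [:: 3; 2; 4; 6; 6];
                       [:: 1; 4; 2; 10; 4];
                       [:: 0; 5; 3; 6; 7]]%N i.-1) j.-1.
Definition bTable (i j : nat) : nat :=
  nth 0%N (nth [::] [:: [:: 1; 2; 3; 1; 0];
                       [:: 8; 7; 2; 4; 5];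
                       [:: 6; 1; 4; 2; 3];
                       [:: 6; 6; 6; 10; 6];
                       [:: 0; 5; 6; 4; 7]]%N i.-1) j.-1.

(* Main.v *)
From HB Require Import structures.
Require Import Defs.
From mathcomp Require Import all_boot all_order all_algebra all_field.
From mathcomp Require Import ring.
Set Implicit Arguments. Unset Strict Implicit. Unset Printing Implicit Defensive.
Import Order.TTheory GRing.Theory.
Local Open Scope ring_scope.

Definition code := (bool * bool)%type.
Definition c0 : code := (false, false).
Definition c1 : code := (true, false).
Definition addc (x y : code) : code := (x.1 (+) y.1, x.2 (+) y.2).
Definition mulc (x y : code) : code :=
  ((x.1 && y.1) (+) (x.2 && y.2), (x.1 && y.2) (+) (x.2 && y.1) (+) (x.2 && y.2)).
Definition cv := (code * code * code * code)%type.

Section Field.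
Variables (F : finFieldType) (w : F).
Hypotheses (h2 : 1 + 1 = 0 :> F) (hw : w * w = w + 1) (hw0 : w != 0) (hw1 : w != 1).

Definition phi (x : code) : F := (x.1 : nat)%:R + (x.2 : nat)%:R * w.

Lemma addxx (x : F) : x + x = 0.
Proof. by rewrite -[x]mulr1 -mulrDr h2 mulr0. Qed.

Lemma oppF (x : F) : - x = x.
Proof. by apply/eqP; rewrite eq_sym -subr_eq0 opprK addxx. Qed.

Lemma xorR (a b : bool) : ((a (+) b : bool) : nat)%:R = (a : nat)%:R + (b : nat)%:R :> F.
Proof. by case: a; case: b; rewrite /= ?add0r ?addr0 // h2. Qed.

Lemma andR (a b : bool) : ((a && b : bool) : nat)%:R = (a : nat)%:R * (b : nat)%:R :> F.
Proof. by case: a; case: b; rewrite /= ?mul0r ?mulr0 ?mul1r ?mulr1. Qed.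

Lemma phi_add x y : phi (addc x y) = phi x + phi y.
Proof. rewrite /phi /addc /= !xorR; ring. Qed.

Lemma phi_mul x y : phi (mulc x y) = phi x * phi y.
Proof.
rewrite /phi /mulc /= !xorR !andR.
set a := (x.1 : nat)%:R; set b := (x.2 : nat)%:R.
set c := (y.1 : nat)%:R; set d := (y.2 : nat)%:R.
apply/eqP; rewrite -subr_eq0; apply/eqP.
transitivity (b * d * (w + 1 - w * w)); first ring.
by rewrite hw subrr mulr0.
Qed.

Lemma phi0 : phi c0 = 0. Proof. by rewrite /phi /= mul0r addr0. Qed.
Lemma phi1 : phi c1 = 1. Proof. by rewrite /phi /= mul0r addr0. Qed.

Lemma phi_eq0 x : (phi x == 0) = (x == c0).
Proof.
case: x => [[] []]; rewrite /phi /= ?mul0r ?mul1r ?addr0 ?add0r ?eqxx ?oner_eq0 //.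
  apply/negbTE; apply/eqP => /eqP; rewrite addr_eq0 oppF eq_sym.
  by rewrite (negbTE hw1).
by rewrite (negbTE hw0).
Qed.

Lemma phi_eq x y : (phi x == phi y) = (x == y).
Proof.
apply/eqP/eqP => [h|->] //.
have : phi (addc x y) == 0 by rewrite phi_add h addxx.
by rewrite phi_eq0; case: x y {h} => [[] []] [[] []].
Qed.

Lemma phi_inj : injective phi.
Proof. by move=> x y /eqP; rewrite phi_eq => /eqP. Qed.


Definition phiV (y : cv) : 'rV[F]_4 := mkv (phi y.1.1.1) (phi y.1.1.2) (phi y.1.2) (phi y.2).

Definition cgetn (y : cv) (n : nat) : code :=
  match n with 0 => y.1.1.1 | 1 => y.1.1.2 | 2 => y.1.2 | _ => y.2 end%N.

Lemma phiV_entry y (i : 'I_4) : phiV y 0 i = phi (cgetn y i).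
Proof. by rewrite /phiV /mkv mxE; case: i => [[|[|[|[|i]]]] hi]. Qed.

Lemma phiV_eq u v : (phiV u == phiV v) = (u == v).
Proof.
apply/eqP/eqP => [h|->] //.
have e : forall i : 'I_4, cgetn u i = cgetn v i.
  by move=> i; apply: phi_inj; rewrite -!phiV_entry h.
move: (e (Ordinal (isT : 0 < 4)%N)) (e (Ordinal (isT : 1 < 4)%N))
      (e (Ordinal (isT : 2 < 4)%N)) (e (Ordinal (isT : 3 < 4)%N)); clear e h.
by case: u => [[[? ?] ?] ?]; case: v => [[[? ?] ?] ?] /= -> -> -> ->.
Qed.

Definition scalec (k : code) (v : cv) : cv :=
  (mulc k v.1.1.1, mulc k v.1.1.2, mulc k v.1.2, mulc k v.2).
Definition addv (u v : cv) : cv :=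
  (addc u.1.1.1 v.1.1.1, addc u.1.1.2 v.1.1.2, addc u.1.2 v.1.2, addc u.2 v.2).

Lemma phiV_scale k v : phi k *: phiV v = phiV (scalec k v).
Proof.
by apply/rowP => i; rewrite !mxE; case: i => [[|[|[|[|i]]]] hi] //=; rewrite phi_mul.
Qed.

Lemma phiV_add u v : phiV u + phiV v = phiV (addv u v).
Proof.
by apply/rowP => i; rewrite !mxE; case: i => [[|[|[|[|i]]]] hi] //=; rewrite phi_add.
Qed.


Hypothesis hF4 : #|F| = 4%N.

Definition codes : seq code := [:: (false, false); (true, false); (false, true); (true, true)].
Definition ocodes : seq (option code) := None :: map Some codes.
Definition cvs : seq cv :=
  [seq (x, d) | x <- [seq (y, c) | y <- [seq (a, b) | a <- codes, b <- codes], c <- codes], d <- codes].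

Lemma mem_codes c : c \in codes. Proof. by case: c => [[] []]. Qed.

Lemma phi_bij : bijective phi.
Proof. apply: (inj_card_bij phi_inj); by rewrite hF4 card_prod card_bool. Qed.

Lemma phi_surj (k : F) : exists2 c, c \in codes & k = phi c.
Proof. case: phi_bij => g _ gK; exists (g k); [exact: mem_codes | by rewrite gK]. Qed.

Lemma existsF (P : pred F) : [exists k, P k] = has (fun c => P (phi c)) codes.
Proof.
apply/existsP/hasP => [[k Pk]|[c _ Pc]]; last by exists (phi c).
by case: (phi_surj k) => c cin ek; exists c; rewrite -?ek.
Qed.

Lemma existsOF (P : pred (option F)) :
  [exists t, P t] = has (fun c => P (omap phi c)) ocodes.
Proof.
apply/existsP/hasP => [[[k|] Pk]|[c _ Pc]]; last by exists (omap phi c).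
  case: (phi_surj k) => c cin ek; exists (Some c); last by rewrite /= -ek.
  by case: (c) => [[] []].
by exists None; rewrite ?inE.
Qed.

Lemma mem_cvs y : y \in cvs.
Proof. by case: y => [[[[[] []] [[] []]] [[] []]] [[] []]]. Qed.

Lemma uniq_cvs : uniq cvs. Proof. by vm_compute. Qed.

Lemma phiV_inj : injective phiV.
Proof. by move=> u v /eqP; rewrite phiV_eq => /eqP. Qed.

Lemma phiV_surj (x : 'rV[F]_4) : exists y, x = phiV y.
Proof.
have [a _ ea] := phi_surj (x 0 (Ordinal (isT : 0 < 4)%N)).
have [b _ eb] := phi_surj (x 0 (Ordinal (isT : 1 < 4)%N)).
have [c _ ec] := phi_surj (x 0 (Ordinal (isT : 2 < 4)%N)).
have [d _ ed] := phi_surj (x 0 (Ordinal (isT : 3 < 4)%N)).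
exists (a, b, c, d); apply/rowP => i; rewrite phiV_entry.
case: i => [[|[|[|[|i]]]] hi] //=; [rewrite -ea|rewrite -eb|rewrite -ec|rewrite -ed]; congr (x _ _); exact: val_inj.
Qed.

Lemma card_transport (P : pred 'rV[F]_4) :
  #|[set x | P x]| = count (fun y => P (phiV y)) cvs.
Proof.
rewrite cardsE cardE /enum_mem size_filter -enumT.
have pe : perm_eq (enum 'rV[F]_4) (map phiV cvs).
  apply: uniq_perm; rewrite ?enum_uniq ?(map_inj_uniq phiV_inj) ?uniq_cvs //.
  move=> x; rewrite mem_enum; case: (phiV_surj x) => y ->.
  by rewrite map_f ?mem_cvs.
by move/permP: pe => ->; rewrite count_map.
Qed.

Lemma exI n (Q : nat -> bool) : [exists i : 'I_n, Q i] = has Q (iota 0 n).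
Proof.
apply/existsP/hasP => [[i Qi]|[k]]; first by exists (val i); rewrite ?mem_iota /=.
by rewrite mem_iota /= add0n => kn Qk; exists (Ordinal kn).
Qed.

Lemma faI n (Q : nat -> bool) (i : nat) : (i <= n)%N ->
  [forall j : 'I_n, (j < i)%N ==> Q j] = all Q (iota 0 i).
Proof.
move=> le; apply/forallP/allP => [h k|h j]; last first.
  by apply/implyP => ji; apply: h; rewrite mem_iota.
rewrite mem_iota add0n /= => ki.
by have := h (Ordinal (leq_trans ki le)); rewrite /= ki.
Qed.

Definition normc (y : cv) : bool :=
  has (fun i => (cgetn y i == c1) && all (fun j => cgetn y j == c0) (iota 0 i)) (iota 0 4).

Lemma norm_tr y : normalized (phiV y) = normc y.
Proof.
rewrite /normalized.
transitivity [exists i : 'I_4, (cgetn y i == c1) && all (fun j => cgetn y j == c0) (iota 0 i)].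
  apply: eq_existsb => i; rewrite phiV_entry -phi1 phi_eq -(@faI 4 (fun j => cgetn y j == c0)) ?(ltnW (ltn_ord i)) //.
  by congr andb; apply: eq_forallb => j; rewrite phiV_entry -phi0 phi_eq.
exact: (@exI 4 (fun i => (cgetn y i == c1) && all (fun j => cgetn y j == c0) (iota 0 i))).
Qed.

Definition incc (x c : cv) : bool :=
  addc (mulc c.1.1.1 x.1.1.1) (addc (mulc c.1.1.2 x.1.1.2)
    (addc (mulc c.1.2 x.1.2) (addc (mulc c.2 x.2) c0))) == c0.

Lemma inc_tr x c : incident (phiV x) (phiV c) = incc x c.
Proof.
rewrite /incident !big_ord_recl big_ord0 !phiV_entry /=.
by rewrite -phi0 -!phi_mul -!phi_add phi_eq.
Qed.

Definition curvec (t : option code) : cv :=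
  match t with Some t => (mulc t (mulc t t), mulc t t, t, c1) | None => (c1, c0, c0, c0) end.
Definition tangc (t : option code) : cv :=
  match t with Some t => (mulc t t, c0, c1, c0) | None => (c0, c1, c0, c0) end.
Definition oscc (t : option code) : cv :=
  match t with Some t => (c1, t, mulc t t, mulc t (mulc t t)) | None => (c0, c0, c0, c1) end.

Lemma n2 : 2%:R = 0 :> F. Proof. by rewrite mulr2n h2. Qed.
Lemma n3 : 3%:R = 1 :> F. Proof. by rewrite mulrS n2 addr0. Qed.

Lemma curve_tr t : curvePt (omap phi t) = phiV (curvec t).
Proof.
case: t => [t|]; rewrite /phiV /= ?phi0 ?phi1 //.
by rewrite !phi_mul !exprS expr0 !mulr1.
Qed.

Lemma tang_tr t : tangDir (omap phi t) = phiV (tangc t).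
Proof.
case: t => [t|]; rewrite /phiV /= ?phi0 ?phi1 //.
by rewrite !phi_mul n3 n2 mul1r mul0r !exprS expr0 !mulr1.
Qed.

Lemma osc_tr t : oscPlane (omap phi t) = phiV (oscc t).
Proof.
case: t => [t|]; rewrite /phiV /= ?phi0 ?phi1 //.
by rewrite !phi_mul n3 !mul1r !oppF !exprS expr0 !mulr1.
Qed.

Definition projc (u v : cv) : bool := has (fun k => (k != c0) && (u == scalec k v)) codes.

Lemma proj_tr u v : proj_eq (phiV u) (phiV v) = projc u v.
Proof.
rewrite /proj_eq existsF; apply: eq_has => k.
by rewrite -phi0 phi_eq phiV_scale phiV_eq.
Qed.

Definition onCurvec (x : cv) : bool := has (fun t => projc x (curvec t)) ocodes.
Lemma onCurve_tr x : onCurve (phiV x) = onCurvec x.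
Proof. by rewrite /onCurve existsOF; apply: eq_has => t; rewrite curve_tr proj_tr. Qed.

Definition isGamc (x : cv) : bool := has (fun t => projc x (oscc t)) ocodes.
Lemma isGam_tr x : isGammaPlane (phiV x) = isGamc x.
Proof. by rewrite /isGammaPlane existsOF; apply: eq_has => t; rewrite osc_tr proj_tr. Qed.

Definition onTangc (x : cv) : bool :=
  has (fun t => has (fun a => has (fun b => ((a, b) != (c0, c0)) &&
     (x == addv (scalec a (curvec t)) (scalec b (tangc t)))) codes) codes) ocodes.
Lemma onTang_tr x : onTangent (phiV x) = onTangc x.
Proof.
rewrite /onTangent existsOF; apply: eq_has => t; rewrite existsF; apply: eq_has => a.
rewrite existsF; apply: eq_has => b.
by rewrite !xpair_eqE -!phi0 !phi_eq curve_tr tang_tr !phiV_scale phiV_add phiV_eq.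
Qed.

Definition curveMeetc (c : cv) : nat := count (fun x => normc x && onCurvec x && incc x c) cvs.
Lemma curveMeet_tr c : curveMeet (phiV c) = curveMeetc c.
Proof.
rewrite /curveMeet (card_transport (fun x => (x \in pointsSet F) && (onCurve x && incident x (phiV c)))).
by apply: eq_count => y; rewrite inE norm_tr onCurve_tr inc_tr andbA.
Qed.

Definition numGamc (x : cv) : nat := count (fun c => normc c && isGamc c && incc x c) cvs.
Lemma numGam_tr x : numGamma (phiV x) = numGamc x.
Proof.
rewrite /numGamma (card_transport (fun c => (c \in planesSet F) && (isGammaPlane c && incident (phiV x) c))).
by apply: eq_count => y; rewrite inE norm_tr isGam_tr inc_tr andbA.
Qed.

End Field.

Definition pdata (x : cv) : bool * bool * nat := (onCurvec x, onTangc x, numGamc x).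
Definition qdata (c : cv) : bool * nat := (isGamc c, curveMeetc c).

Definition pointFromData (j : nat) (d : bool * bool * nat) : bool :=
  match j with
  | 1 => d.1.1
  | 2 => ~~ d.1.1 && d.1.2
  | 3 => ~~ d.1.1 && ~~ d.1.2 && (d.2 == 3)
  | 4 => ~~ d.1.1 && ~~ d.1.2 && (d.2 == 1)
  | 5 => ~~ d.1.1 && ~~ d.1.2 && (d.2 == 0)
  | _ => false
  end%N.

Definition planeFromData (i : nat) (d : bool * nat) : bool :=
  match i with
  | 1 => d.1
  | 2 => d.2 == 2
  | 3 => d.2 == 3
  | 4 => ~~ d.1 && (d.2 == 1)
  | 5 => d.2 == 0
  | _ => false
  end%N.

Definition checkT (PL : seq (cv * (bool * bool * nat))) (QL : seq (cv * (bool * nat))) i j :=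
  all (fun cq => planeFromData i cq.2 ==>
     (count (fun xp => pointFromData j xp.2 && incc xp.1 cq.1) PL == tTable i j)) QL.
Definition checkB (PL : seq (cv * (bool * bool * nat))) (QL : seq (cv * (bool * nat))) i j :=
  all (fun xp => pointFromData j xp.2 ==>
     (count (fun cq => planeFromData i cq.2 && incc xp.1 cq.1) QL == bTable i j)) PL.
Definition checkAll PL QL :=
  all (fun i => all (fun j => checkT PL QL i j && checkB PL QL i j) (iota 1 5)) (iota 1 5).

Definition PLd := [seq (y, pdata y) | y <- cvs & normc y].
Definition QLd := [seq (c, qdata c) | c <- cvs & normc c].

Lemma checkAll_ok : checkAll PLd QLd.
Proof. by vm_compute. Qed.
Lemma field4 (F : finFieldType) : #|F| = 4%N ->
  exists w : F, [/\ 1 + 1 = 0 :> F, w * w = w + 1, w != 0 & w != 1].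
Proof.
move=> hF.
have h2 : 1 + 1 = 0 :> F.
  have := pcharf0 (@card_finPcharP F 2 2 hF isT).
  by rewrite -mulr2n.
have oppF (x : F) : - x = x.
  by apply/eqP; rewrite eq_sym -subr_eq0 opprK -[x]mulr1 -mulrDr h2 mulr0.
case: (pickP (fun x : F => (x != 0) && (x != 1))) => [w /andP[w0 w1]|none]; last first.
  have : leq (size (enum F)) (size [:: 0 : F; 1]).
    apply: uniq_leq_size; first exact: enum_uniq.
    move=> x _; have := none x; rewrite !inE.
    by case: (x == 0); case: (x == 1).
  by rewrite -cardE hF.
exists w; split => //.
apply/eqP; apply: contraT => hne.
have f1 : w + 1 != 0.
  by rewrite addr_eq0 oppF.
have f2 : w * w != 0 by rewrite mulf_neq0.
have f3 : w + 1 != 1 by rewrite -subr_eq0 addrK.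
have f4 : w * w != 1.
  apply/negP => /eqP h; move: f1; rewrite -[w + 1 == 0]orbb -(mulf_eq0 (w + 1) (w + 1)).
  have -> : (w + 1) * (w + 1) = w * w + 1 + w * (1 + 1) by ring.
  by rewrite h h2 mulr0 addr0 eqxx.
have f5 : w != w + 1.
  apply/negP => /eqP h; have : w + 1 - w == 0 by rewrite -h subrr.
  by rewrite addrC addKr oner_eq0.
have f6 : w != w * w.
  apply/negP => /eqP h; have : w * (w - 1) == 0 by rewrite mulrBr mulr1 -h subrr.
  by rewrite mulf_eq0 subr_eq0 (negbTE w0) (negbTE w1).
have : leq (size [:: 0 : F; 1; w; w + 1; w * w]) (size (enum F)).
  apply: uniq_leq_size => [|x _]; last by rewrite mem_enum.
  rewrite /= !inE !negb_or !andbT.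
  rewrite ![0 == _]eq_sym oner_eq0 ![1 == _]eq_sym w0 f1 f2 w1 f3 f4 f5 f6 /=.
  by rewrite eq_sym.
by rewrite -cardE hF.
Qed.

Section Main.
Variables (F : finFieldType) (w : F).
Hypotheses (h2 : 1 + 1 = 0 :> F) (hw : w * w = w + 1) (hw0 : w != 0) (hw1 : w != 1).
Hypothesis hF4 : #|F| = 4%N.

Lemma planeClass_tr i c : planeClass i (phiV w c) = planeFromData i (qdata c).
Proof.
by rewrite /planeClass isGam_tr // curveMeet_tr //; case: i => [|[|[|[|[|[|i]]]]]].
Qed.

Lemma pointClass_tr j x : pointClass j (phiV w x) = pointFromData j (pdata x).
Proof.
by rewrite /pointClass onCurve_tr // onTang_tr // numGam_tr //; case: j => [|[|[|[|[|[|j]]]]]].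
Qed.

Lemma main_sec : forall i j : nat, (1 <= i <= 5)%N -> (1 <= j <= 5)%N ->
    (forall c, c \in planesSet F -> planeClass i c ->
       #|[set x in pointsSet F | pointClass j x && incident x c]| = tTable i j) /\
    (forall x, x \in pointsSet F -> pointClass j x ->
       #|[set c in planesSet F | planeClass i c && incident x c]| = bTable i j).
Proof.
move=> i j /andP[i1 i5] /andP[j1 j5].
have /andP[cT cB] : checkT PLd QLd i j && checkB PLd QLd i j.
  move: checkAll_ok; rewrite /checkAll => /allP/(_ i); rewrite mem_iota i1 ltnS i5.
  by move=> /(_ isT)/allP/(_ j); rewrite mem_iota j1 ltnS j5 => /(_ isT).
split.
- move=> c hc hpc; have [yc ec] := phiV_surj h2 hw0 hw1 hF4 c; subst c.
  move: hc hpc; rewrite inE norm_tr // planeClass_tr => hc hpc.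
  rewrite (card_transport h2 hw0 hw1 hF4
     (fun x => (x \in pointsSet F) && (pointClass j x && incident x (phiV w yc)))).
  transitivity (count (fun xp => pointFromData j xp.2 && incc xp.1 yc) PLd).
    rewrite /PLd count_map count_filter; apply: eq_count => y /=.
    by rewrite inE norm_tr // pointClass_tr inc_tr // andbC.
  move/allP: cT => /(_ (yc, qdata yc)); rewrite /= hpc /=.
  by move=> h; apply/eqP; apply: h; rewrite /QLd map_f // mem_filter hc mem_cvs.
- move=> x hx hpx; have [y ey] := phiV_surj h2 hw0 hw1 hF4 x; subst x.
  move: hx hpx; rewrite inE norm_tr // pointClass_tr => hx hpx.
  rewrite (card_transport h2 hw0 hw1 hF4
     (fun c => (c \in planesSet F) && (planeClass i c && incident (phiV w y) c))).
  transitivity (count (fun cq => planeFromData i cq.2 && incc y cq.1) QLd).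
    rewrite /QLd count_map count_filter; apply: eq_count => c /=.
    by rewrite inE norm_tr // planeClass_tr inc_tr // andbC.
  move/allP: cB => /(_ (y, pdata y)); rewrite /= hpx /=.
  by move=> h; apply/eqP; apply: h; rewrite /PLd map_f // mem_filter hx mem_cvs.
Qed.

End Main.

Theorem mainTheorem17 (F : finFieldType) (hF : #|F| = 4%N) :
  forall i j : nat, (1 <= i <= 5)%N -> (1 <= j <= 5)%N ->
    (forall c, c \in planesSet F -> planeClass i c ->
       #|[set x in pointsSet F | pointClass j x && incident x c]| = tTable i j) /\
    (forall x, x \in pointsSet F -> pointClass j x ->
       #|[set c in planesSet F | planeClass i c && incident x c]| = bTable i j).
Proof.
have [w [h2 hw hw0 hw1]] := field4 hF.
exact: (main_sec h2 hw hw0 hw1 hF).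
Qed.
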